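(* Let $N=(G=(V,E),\sigma,u,s)$ be a skew-symmetric network with $m=|E|$, and let $f$ be an IS-flow in $N$. Then $f$ has a symmetric decomposition consisting of at most $m$ elementary flows.
   Context: A skew-symmetric graph is a finite directed graph $G=(V,E)$ (parallel arcs allowed) with a map $\sigma$ of $V\cup E$ onto itself such that $\sigma(x)\ne x$, $\sigma(\sigma(x))=x$ for all $x$, $\sigma(V)=V$, and for each arc $a$ from $v$ to $w$, $\sigma(a)$ is an arc from $\sigma(w)$ to $\sigma(v)$; write $x'=\sigma(x)$. The map $\sigma$ extends to paths: $\sigma(P)$ consists of the mates of the elements of $P$ in reverse order. A function $h$ on $E$ is symmetric if $h(a)=h(\sigma(a))$ for all $a$. A skew-symmetric network is $N=(G,\sigma,u,s)$ with $u:E\to\mathbb Z_{\ge0}$ symmetric and a source $s\in V$; $s'=\sigma(s)$ is the sink. A flow is $f:E\to\mathbb R_{\ge 0}$ with $f(a)\le u(a)$ for all $a$ and $\mathrm{div}_f(x):=\sum_{a\text{ leaving }x}f(a)-\sum_{a\text{ entering }x}f(a)=0$ for all $x\in V\setminus\{s,s'\}$; its value is $|f|=\mathrm{div}_f(s)$. An IS-flow is an integer-valued symmetric flow. For a path or cycle $P$, $\chi^P\in\mathbb R^E$ is the incidence vector of its arc set. An elementary flow is an IS-flow in $N$ of the form $g=\delta\chi^P+\delta\chi^{P'}$, where $P$ is a simple cycle, or a simple path from $s$ to $s'$, or a simple path from $s'$ to $s$, $P'=\sigma(P)$, and $\delta$ is a positive integer. A symmetric decomposition of $f$ is a set $D$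 of elementary flows with $f=\sum_{g\in D}g$. *)

(* Defs.v *)
From mathcomp Require Import all_boot.
Set Implicit Arguments. Unset Strict Implicit. Unset Printing Implicit Defensive.

(* A skew-symmetric graph: finite digraph (parallel arcs allowed), arc a goes
   from [tail a] to [head a]; [sigV]/[sigE] is the map sigma on V and on E. *)
Record skew_graph := SkewGraph {
  sg_V : finType;
  sg_E : finType;
  tail : sg_E -> sg_V;
  head : sg_E -> sg_V;
  sigV : sg_V -> sg_V;
  sigE : sg_E -> sg_E;
  sigV_invol : forall v, sigV (sigV v) = v;
  sigE_invol : forall a, sigE (sigE a) = a;
  sigV_nofix : forall v, sigV v != v;
  sigE_nofix : forall a, sigE a != a;
  tail_sigE : forall a, tail (sigE a) = sigV (head a);
  head_sigE : forall a, head (sigE a) = sigV (tail a)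
}.

Section Defs.
Variable G : skew_graph.
Local Notation V := (sg_V G).
Local Notation E := (sg_E G).

Definition symmetric_fun (h : E -> nat) : Prop := forall a, h (sigE a) = h a.

(* A flow (integer-valued, hence nat-valued since nonnegative) in the
   network (G, sigma, u, s) with sink s' = sigV s. *)
Definition is_flow (u : E -> nat) (s : V) (f : E -> nat) : Prop :=
  (forall a, f a <= u a) /\
  (forall x : V, x != s -> x != sigV s ->
     \sum_(a | tail a == x) f a = \sum_(a | head a == x) f a).

Definition is_ISflow (u : E -> nat) (s : V) (f : E -> nat) : Prop :=
  is_flow u s f /\ symmetric_fun f.

Fixpoint walk (x : V) (P : seq E) : bool :=
  match P with
  | [::] => true
  | a :: P' => (tail a == x) && walk (head a) P'
  end.

Definition simple_path (x y : V) (P : seq E) : bool :=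
  [&& walk x P, last x (map (@head G) P) == y & uniq (x :: map (@head G) P)].

Definition simple_cycle (P : seq E) : bool :=
  match P with
  | [::] => false
  | a :: _ => [&& walk (tail a) P, last (tail a) (map (@head G) P) == tail a
                 & uniq (map (@head G) P)]
  end.

Definition sig_path (P : seq E) : seq E := rev (map (@sigE G) P).

Definition chi (P : seq E) (a : E) : nat := (a \in P).

Definition elementary_flow (u : E -> nat) (s : V) (g : E -> nat) : Prop :=
  exists (delta : nat) (P : seq E),
    0 < delta /\
    (simple_cycle P \/ simple_path s (sigV s) P \/ simple_path (sigV s) s P) /\
    (forall a, g a = delta * chi P a + delta * chi (sig_path P) a) /\
    is_ISflow u s g.

End Defs.

(* Main.v *)
Require Import Defs.
From mathcomp Require Import all_boot.
From mathcomp Require Import zify.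
Set Implicit Arguments. Unset Strict Implicit. Unset Printing Implicit Defensive.


Definition otl (L : Type) (T : Type) (x y : L -> T) (o : L -> bool) l :=
  if o l then x l else y l.
Definition ohd (L : Type) (T : Type) (x y : L -> T) (o : L -> bool) l :=
  if o l then y l else x l.

Definition orient_hyp (T : eqType) (L : finType) (S : pred T) (A : {set L})
  (x y : L -> T) :=
  forall v, ~~ S v -> ~~ odd (\sum_(l in A) ((x l == v) + (y l == v))).
Definition orient_concl (T : eqType) (L : finType) (S : pred T) (A : {set L})
  (x y : L -> T) :=
  exists o : L -> bool, forall v, ~~ S v ->
    \sum_(l in A) (otl x y o l == v) = \sum_(l in A) (ohd x y o l == v).

Definition swp (L : finType) (T : Type) (x y : L -> T) (l0 : L) :=
  fun l => if l == l0 then y l else x l.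

Lemma orient_swap_hyp (T : eqType) (L : finType) (S : pred T) A (x y : L -> T) l0 :
  orient_hyp S A x y -> orient_hyp S A (swp x y l0) (swp y x l0).
Proof.
move=> H v Sv; have := H v Sv.
congr (~~ odd _); apply: eq_bigr => l _; rewrite /swp; case: (l == l0) => //.
by rewrite addnC.
Qed.

Lemma orient_swap_concl (T : eqType) (L : finType) (S : pred T) A (x y : L -> T) l0 :
  orient_concl S A (swp x y l0) (swp y x l0) -> orient_concl S A x y.
Proof.
case=> o Ho; exists (fun l => if l == l0 then ~~ o l else o l) => v Sv.
transitivity (\sum_(l in A) (otl (swp x y l0) (swp y x l0) o l == v)).
  by apply: eq_bigr => l _; rewrite /otl /swp; case: (l == l0); case: (o l).
rewrite Ho //; apply: eq_bigr => l _; rewrite /ohd /swp.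
by case: (l == l0); case: (o l).
Qed.

Lemma odd_aux (b1 b2 b3 : nat) R :
  ~~ odd (b1 + b2 + (b1 + b3 + R)) -> ~~ odd (b2 + b3 + R).
Proof.
have -> : b1 + b2 + (b1 + b3 + R) = b2 + b3 + R + b1.*2 by rewrite -addnn; lia.
by rewrite oddD odd_double addbF.
Qed.

Lemma orient_main (T : eqType) (L : finType) (S : pred T) n :
  forall (A : {set L}) (x y : L -> T), #|A| <= n -> orient_hyp S A x y -> orient_concl S A x y.
Proof.
elim: n => [|n IH] A x y.
  rewrite leqn0 => /eqP/cards0_eq -> _; exists (fun _ => true) => v _.
  by rewrite !big_set0.
move=> cA HA; case: (set_0Vmem A) => [->|[l0 l0A]].
  by exists (fun _ => true) => v _; rewrite !big_set0.
have cA0 : #|A :\ l0| <= n by move: cA; rewrite (cardsD1 l0) l0A.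
have [loop|nloop] := eqVneq (x l0) (y l0).
  have H' : orient_hyp S (A :\ l0) x y.
    move=> v Sv; have := HA v Sv; rewrite (big_setD1 l0 l0A) /= loop addnn.
    by rewrite oddD odd_double.
  case: (IH _ _ _ cA0 H') => o Ho; exists o => v Sv.
  by rewrite !(big_setD1 l0 l0A) Ho // /otl /ohd loop; case: (o l0).
have [/andP[Sx Sy]|nS] := boolP (S (x l0) && S (y l0)).
  have Hv : forall v, ~~ S v -> (x l0 == v) = false /\ (y l0 == v) = false.
    by move=> v Sv; split; apply/eqP => E; move: Sv; rewrite -E ?Sx ?Sy.
  have H' : orient_hyp S (A :\ l0) x y.
    move=> v Sv; have := HA v Sv; rewrite (big_setD1 l0 l0A) /=.
    by case: (Hv v Sv) => -> ->.
  case: (IH _ _ _ cA0 H') => o Ho; exists o => v Sv.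
  rewrite !(big_setD1 l0 l0A) Ho // /otl /ohd.
  by case: (Hv v Sv) => E1 E2; case: (o l0); rewrite ?E1 ?E2.
rewrite negb_and in nS.
wlog Sx : x y HA nloop nS / ~~ S (x l0).
  move=> W; case/orP: (nS) => [Sx|Sy]; first exact: W.
  apply: (orient_swap_concl (l0:=l0)); apply: W.
  - exact: orient_swap_hyp.
  - by rewrite /swp eqxx eq_sym.
  - by rewrite /swp eqxx orbC.
  - by rewrite /swp eqxx.
have [l1 l1A l1p] : exists2 l1, l1 \in A :\ l0 & (x l1 == x l0) || (y l1 == x l0).
  case: (pickP [pred l | (l \in A :\ l0) && ((x l == x l0) || (y l == x l0))])
    => [l1 /andP[]|none]; first by exists l1.
  have := HA (x l0) Sx; rewrite (big_setD1 l0 l0A) /= eqxx eq_sym (negbTE nloop).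
  rewrite big1 //= => l lA; have := none l; rewrite /= lA /=.
  by case: (x l == x l0); case: (y l == x l0).
have l1l0 : l1 != l0 by move: l1A; rewrite in_setD1 => /andP[].
have l1A' : l1 \in A by move: l1A; rewrite in_setD1 => /andP[].
have l0A' : l0 \in A :\ l1 by rewrite in_setD1 eq_sym l1l0.
wlog xl1 : x y HA nloop nS Sx l1p / x l1 == x l0.
  move=> W; case/orP: (l1p) => [h|h]; first exact: W.
  have E0 : forall (f g : L -> T), swp f g l1 l0 = f l0.
    by move=> f g; rewrite /swp eq_sym (negbTE l1l0).
  apply: (orient_swap_concl (l0:=l1)); apply: W; rewrite ?E0 //.
  - exact: orient_swap_hyp.
  - by rewrite /swp eqxx h.
  - by rewrite /swp eqxx.
pose z := y l1.
pose x' := fun l => if l == l0 then z else x l.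
have cA1 : #|A :\ l1| <= n by move: cA; rewrite (cardsD1 l1) l1A'.
have restx : forall l, l \in A :\ l1 :\ l0 -> x' l = x l.
  by move=> l; rewrite in_setD1 /x' => /andP[/negbTE -> _].
have H' : orient_hyp S (A :\ l1) x' y.
  move=> v Sv; have := HA v Sv.
  rewrite (big_setD1 l1 l1A') (big_setD1 l0 l0A') (big_setD1 l0 l0A').
  have Er : \sum_(l in A :\ l1 :\ l0) ((x' l == v) + (y l == v)) =
     \sum_(l in A :\ l1 :\ l0) ((x l == v) + (y l == v)).
    by apply: eq_bigr => l /restx ->.
  rewrite Er.
  rewrite /x' eqxx (eqP xl1) -/z.
  by rewrite /=; apply: odd_aux.
case: (IH _ _ _ cA1 H') => o' Ho'.
exists (fun l => if l == l1 then ~~ o' l0 else o' l) => v Sv.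
have := Ho' v Sv.
rewrite !(big_setD1 l1 l1A') !(big_setD1 l0 l0A').
have restE : forall F : T -> nat,
  \sum_(i in A :\ l1 :\ l0) F (otl x y (fun l => if l == l1 then ~~ o' l0 else o' l) i)
  = \sum_(i in A :\ l1 :\ l0) F (otl x' y o' i).
  move=> F; apply: eq_bigr => l lA; rewrite /otl restx //.
  by move: lA; rewrite !in_setD1 => /and3P[_ /negbTE -> _].
have restE2 : forall F : T -> nat,
  \sum_(i in A :\ l1 :\ l0) F (ohd x y (fun l => if l == l1 then ~~ o' l0 else o' l) i)
  = \sum_(i in A :\ l1 :\ l0) F (ohd x' y o' i).
  move=> F; apply: eq_bigr => l lA; rewrite /ohd restx //.
  by move: lA; rewrite !in_setD1 => /and3P[_ /negbTE -> _].
rewrite (restE (fun t => nat_of_bool (t == v))) (restE2 (fun t => nat_of_bool (t == v))).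
have l0l1 : l0 != l1 by rewrite eq_sym.
rewrite /= /otl /ohd eqxx (negbTE l0l1) /x' eqxx (eqP xl1).
move: (\sum_(i in A :\ l1 :\ l0) _) (\sum_(i in A :\ l1 :\ l0) _) => R1 R2.
by case: (o' l0) => /= E; clear -E; rewrite /z in E; lia.
Qed.


Notation hd := Defs.head.

Definition cons_at (G : skew_graph) (s : sg_V G) (h : sg_E G -> nat) :=
  forall x, x != s -> x != sigV s ->
    \sum_(a | tail a == x) h a = \sum_(a | hd a == x) h a.

Lemma sum_cond (T : finType) (P : pred T) (F : T -> nat) :
  \sum_(b | P b) F b = \sum_b P b * F b.
Proof. by rewrite big_mkcond; apply: eq_bigr => b _; case: (P b); rewrite ?mul1n. Qed.

Lemma sum_sig (G : skew_graph) (P : pred (sg_E G)) (F : sg_E G -> nat) :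
  \sum_(b | P b) F b = \sum_(b | P (sigE b)) F (sigE b).
Proof. exact: (reindex_inj (can_inj (@sigE_invol G))). Qed.

Lemma sigV_eq (G : skew_graph) (w v : sg_V G) : (sigV w == v) = (w == sigV v).
Proof. by rewrite -{1}(sigV_invol v) (inj_eq (can_inj (@sigV_invol G))). Qed.

Lemma sigE_eq (G : skew_graph) (w v : sg_E G) : (sigE w == v) = (w == sigE v).
Proof. by rewrite -{1}(sigE_invol v) (inj_eq (can_inj (@sigE_invol G))). Qed.

Definition isrep (G : skew_graph) (a : sg_E G) := (enum_rank a < enum_rank (sigE a))%N.

Lemma isrep_sig (G : skew_graph) (a : sg_E G) : isrep (sigE a) = ~~ isrep a.
Proof.
rewrite /isrep sigE_invol -leqNgt ltn_neqAle; apply: andb_idl => _.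
apply/negP => /eqP/val_inj/enum_rank_inj E; by move: (sigE_nofix a); rewrite E eqxx.
Qed.

Definition isrepV (G : skew_graph) (v : sg_V G) := (enum_rank v < enum_rank (sigV v))%N.
Definition repV (G : skew_graph) (v : sg_V G) := if isrepV v then v else sigV v.

Lemma isrepV_sig (G : skew_graph) (a : sg_V G) : isrepV (sigV a) = ~~ isrepV a.
Proof.
rewrite /isrepV sigV_invol -leqNgt ltn_neqAle; apply: andb_idl => _.
apply/negP => /eqP/val_inj/enum_rank_inj E; by move: (sigV_nofix a); rewrite E eqxx.
Qed.

Lemma repV_sig (G : skew_graph) (v : sg_V G) : repV (sigV v) = repV v.
Proof. by rewrite /repV isrepV_sig sigV_invol; case: (isrepV v). Qed.

Lemma repV_or (G : skew_graph) (v : sg_V G) : (repV v = v) \/ (repV v = sigV v).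
Proof. by rewrite /repV; case: (isrepV v); [left|right]. Qed.

Lemma repV_id (G : skew_graph) (v : sg_V G) : repV (repV v) = repV v.
Proof. by case: (repV_or v) => E; rewrite {1}E ?repV_sig. Qed.

Lemma repV_eq (G : skew_graph) (w v : sg_V G) :
  (repV w == repV v) = (w == v) || (w == sigV v).
Proof.
apply/eqP/orP.
  case: (repV_or w) => ->; case: (repV_or v) => ->.
  - by move=> ->; left.
  - by move=> ->; right.
  - by move=> <-; right; rewrite sigV_invol.
  - by move=> /(can_inj (@sigV_invol G)) ->; left.
by case=> /eqP ->; rewrite ?repV_sig.
Qed.

Lemma repV_eqn (G : skew_graph) (w v : sg_V G) :
  ((repV w == repV v) : nat) = (w == v) + (w == sigV v).
Proof.
rewrite repV_eq; have [->|] := eqVneq w v; last by [].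
by rewrite eq_sym (negbTE (sigV_nofix v)).
Qed.

Definition oddA (G : skew_graph) (f : sg_E G -> nat) :=
  [set a | odd (f a) && isrep a].

Lemma split_odd (G : skew_graph) (f : sg_E G -> nat) (hf : symmetric_fun f)
  (F : sg_E G -> nat) :
  \sum_(b | odd (f b)) F b = \sum_(l in oddA f) (F l + F (sigE l)).
Proof.
rewrite (bigID (@isrep G)) /= [X in _ + X]sum_sig big_split /=.
congr (_ + _); apply: eq_bigl => b; rewrite ?inE //.
by rewrite hf isrep_sig negbK.
Qed.

Lemma odd_split_sum (T : finType) (t : pred T) (f : T -> nat) :
  \sum_(b | t b) f b = \sum_b (t b && odd (f b)) + 2 * \sum_b t b * (f b)./2.
Proof.
rewrite sum_cond big_distrr -big_split; apply: eq_bigr => b _ /=.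
have := odd_double_half (f b); case: (t b) => /=; rewrite ?mul1n ?mul0n //.
by rewrite -muln2; lia.
Qed.

Lemma par_aux a b X Y : a + 2 * X = b + 2 * Y -> ~~ odd (a + b).
Proof.
move=> E; have -> : a + b = (b + Y - X).*2 by rewrite -muln2; lia.
by rewrite odd_double.
Qed.

Lemma parity_cons (G : skew_graph) (s : sg_V G) (f : sg_E G -> nat)
  (hc : cons_at s f) c : c != s -> c != sigV s ->
  ~~ odd (\sum_(b | odd (f b)) ((tail b == c) + (hd b == c))).
Proof.
move=> H1 H2; have := hc c H1 H2.
rewrite (odd_split_sum (fun b => tail b == c)) (odd_split_sum (fun b => hd b == c)) => E.
have -> : \sum_(b | odd (f b)) ((tail b == c) + (hd b == c)) =
   \sum_b ((tail b == c) && odd (f b)) + \sum_b ((hd b == c) && odd (f b)).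
  rewrite sum_cond -big_split; apply: eq_bigr => b _ /=.
  by case: (odd (f b)); case: (tail b == c); case: (hd b == c).
exact: par_aux E.
Qed.

Lemma perm4 (a b c d : nat) : a + b + (c + d) = a + c + (d + b).
Proof. lia. Qed.

Lemma half_aux n (b : bool) : n./2 + (odd n && b) + (n./2 + (odd n && ~~ b)) = n.
Proof. have := odd_double_half n; case: (odd n); case: b => /=; rewrite -?addnn; lia. Qed.

Lemma final_aux Th Dh Tf Df Ht Nt Hd Nd :
  2 * Th + Nt = Tf + Ht -> 2 * Dh + Nd = Df + Hd -> Ht + Nd = Hd + Nt -> Tf = Df ->
  Th = Dh.
Proof. lia. Qed.

Lemma pt_aux (t od i : bool) n : odd n = od ->
  2 * (t * (n./2 + (od && i))) + (t && od && ~~ i) = t * n + (t && od && i).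
Proof.
move=> <-; have := odd_double_half n; case: t; case: (odd n); case: i => /=;
  rewrite ?mul1n ?mul0n -?addnn; lia.
Qed.

Lemma exists_half (G : skew_graph) (s : sg_V G) (f : sg_E G -> nat)
  (hf : symmetric_fun f) (hc : cons_at s f) :
  exists h : sg_E G -> nat, (forall a, h a + h (sigE a) = f a) /\ cons_at s h.
Proof.
pose A := oddA f.
pose x := fun l : sg_E G => repV (tail l).
pose y := fun l : sg_E G => repV (hd l).
pose S := fun c : sg_V G => c == repV s.
have notS : forall v, v != s -> v != sigV s -> ~~ S (repV v).
  by move=> v H1 H2; rewrite /S repV_eq negb_or H1 H2.
have HA : orient_hyp S A x y.
  move=> c Sc.
  have [Ec|Nc] := eqVneq (repV c) c; last first.
    have F : forall w, (repV w == c) = false.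
      by move=> w; apply/eqP => E; move: Nc; rewrite -E repV_id eqxx.
    by rewrite big1 // => l _; rewrite /x /y !F.
  have cs : c != s.
    by apply/eqP => E; move: Sc Ec; rewrite /S E => Sc Ec; rewrite Ec eqxx in Sc.
  have cs' : c != sigV s.
    apply/eqP => E; move: Sc Ec; rewrite /S E repV_sig => Sc Ec.
    by rewrite Ec eqxx in Sc.
  have := parity_cons hc cs cs'; rewrite (split_odd hf) => P.
  have Ew : forall w, (repV w == c) = (repV w == repV c) by move=> w; rewrite Ec.
  rewrite (eq_bigr (fun l => ((tail l == c) + (hd l == c)) +
     ((tail (sigE l) == c) + (hd (sigE l) == c)))) //.
  move=> l _; rewrite /x /y !Ew !repV_eqn tail_sigE head_sigE !sigV_eq.
  by rewrite perm4.
case: (orient_main (n:=#|A|) (leqnn _) HA) => o Ho.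
pose inH b := if isrep b then o b else ~~ o (sigE b).
have inH_sig : forall b, inH (sigE b) = ~~ inH b.
  move=> b; rewrite /inH isrep_sig sigE_invol.
  by case: (isrep b) => //=; rewrite negbK.
exists (fun b => (f b)./2 + (odd (f b) && inH b)); split.
  by move=> a; rewrite hf inH_sig half_aux.
move=> v H1 H2.
have := Ho (repV v) (notS v H1 H2).
have EK : \sum_(l in A) (otl x y o l == repV v) =
   \sum_(b | odd (f b)) ((inH b && (tail b == v)) + (~~ inH b && (hd b == v))).
  rewrite (split_odd hf); apply: eq_bigr => l; rewrite inE => /andP[_ rl].
  rewrite /otl /x /y /inH rl isrep_sig rl /= sigE_invol tail_sigE head_sigE.
  rewrite !sigV_eq.
  by case: (o l) => /=; rewrite repV_eqn ?addn0 ?add0n.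
have EK' : \sum_(l in A) (ohd x y o l == repV v) =
   \sum_(b | odd (f b)) ((inH b && (hd b == v)) + (~~ inH b && (tail b == v))).
  rewrite (split_odd hf); apply: eq_bigr => l; rewrite inE => /andP[_ rl].
  rewrite /ohd /x /y /inH rl isrep_sig rl /= sigE_invol tail_sigE head_sigE.
  rewrite !sigV_eq.
  by case: (o l) => /=; rewrite repV_eqn ?addn0 ?add0n.
rewrite EK EK' => Ebal.
pose Ht := \sum_b ((tail b == v) && odd (f b) && inH b).
pose Nt := \sum_b ((tail b == v) && odd (f b) && ~~ inH b).
pose Hd := \sum_b ((hd b == v) && odd (f b) && inH b).
pose Nd := \sum_b ((hd b == v) && odd (f b) && ~~ inH b).
apply: (final_aux (Ht := Ht) (Nt := Nt) (Hd := Hd) (Nd := Nd)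
         (Tf := \sum_(b | tail b == v) f b) (Df := \sum_(b | hd b == v) f b)).
- rewrite /Nt /Ht (sum_cond (fun b => tail b == v) (fun b => (f b)./2 + _)).
  rewrite (sum_cond (fun b => tail b == v) f) big_distrr -!big_split.
  by apply: eq_bigr => b _; apply: pt_aux.
- rewrite /Nd /Hd (sum_cond (fun b => hd b == v) (fun b => (f b)./2 + _)).
  rewrite (sum_cond (fun b => hd b == v) f) big_distrr -!big_split.
  by apply: eq_bigr => b _; apply: pt_aux.
- move: Ebal; rewrite !(sum_cond (fun b => odd (f b))) => Ebal.
  transitivity (\sum_b odd (f b) * ((inH b && (tail b == v)) + (~~ inH b && (hd b == v)))).
    rewrite /Ht /Nd -big_split; apply: eq_bigr => b _ /=.
    by case: (odd (f b)); case: (inH b); case: (tail b == v); case: (hd b == v).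
  rewrite Ebal /Hd /Nt -big_split; apply: eq_bigr => b _ /=.
  by case: (odd (f b)); case: (inH b); case: (tail b == v); case: (hd b == v).
- exact: hc.
Qed.


Definition Rh (G : skew_graph) (h : sg_E G -> nat) : rel (sg_V G) :=
  fun v w => [exists a, (0 < h a) && (tail a == v) && (hd a == w)].

Fixpoint arcs_of (G : skew_graph) (h : sg_E G -> nat) (d : sg_E G) (x : sg_V G)
  (p : seq (sg_V G)) : seq (sg_E G) :=
  if p is y :: p' then
    odflt d [pick a | (0 < h a) && (tail a == x) && (hd a == y)] :: arcs_of h d y p'
  else [::].

Lemma arcs_ofP (G : skew_graph) (h : sg_E G -> nat) (d : sg_E G) (x : sg_V G) p :
  path (Rh h) x p ->
  [/\ walk x (arcs_of h d x p), map (@hd G) (arcs_of h d x p) = p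
    & all (fun a => 0 < h a) (arcs_of h d x p)].
Proof.
elim: p x => [|y p IH] x //= /andP[Rxy Pp].
case: pickP => [a /andP[/andP[ha ta] hda]|none]; last first.
  by move/existsP: Rxy => [a Ha]; rewrite none in Ha.
case: (IH y Pp) => W M Al; rewrite /= ta ha (eqP hda) W M Al; split => //.
Qed.

Lemma conn_path (G : skew_graph) (h : sg_E G -> nat) (d : sg_E G) (x y : sg_V G) :
  connect (Rh h) x y ->
  exists P, simple_path x y P /\ all (fun a => 0 < h a) P.
Proof.
move/connectP => [p pP ->]; case/shortenP: pP => p' p'P up' _.
case: (arcs_ofP d p'P) => W M Al; exists (arcs_of h d x p'); split => //.
by rewrite /simple_path W M eqxx up'.
Qed.

Lemma cut (G : skew_graph) (s : sg_V G) (h : sg_E G -> nat) (hc : cons_at s h)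
  (A : {set sg_V G}) : s \notin A -> sigV s \notin A ->
  \sum_(a | (tail a \in A) && (hd a \notin A)) h a =
  \sum_(a | (hd a \in A) && (tail a \notin A)) h a.
Proof.
move=> sA s'A.
have E : \sum_(a | tail a \in A) h a = \sum_(a | hd a \in A) h a.
  rewrite (partition_big (@tail G) (mem A)) //.
  rewrite [RHS](partition_big (@hd G) (mem A)) //.
  apply: eq_bigr => z zA0; have zA : z \in A by [].
  have zs : z != s by apply: contraNneq sA => <-.
  have zs' : z != sigV s by apply: contraNneq s'A => <-.
  rewrite (eq_bigl (fun a => tail a == z)); last first.
    by move=> a /=; case: eqP => [->|_]; rewrite ?zA ?andbF.
  rewrite [RHS](eq_bigl (fun a => hd a == z)); last first.
    by move=> a /=; case: eqP => [->|_]; rewrite ?zA ?andbF.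
  exact: hc.
move: E; rewrite (bigID (fun a => hd a \in A)) [RHS](bigID (fun a => tail a \in A)) /=.
rewrite (eq_bigl (fun a => (hd a \in A) && (tail a \in A))); last first.
  by move=> a; rewrite andbC.
by move/addnI.
Qed.

Lemma pos_arc (G : skew_graph) (h : sg_E G -> nat) a :
  0 < h a -> Rh h (tail a) (hd a).
Proof. by move=> ha; apply/existsP; exists a; rewrite ha !eqxx. Qed.

Lemma sum_ge (T : finType) (P : pred T) (F : T -> nat) a0 :
  P a0 -> F a0 <= \sum_(a | P a) F a.
Proof. by move=> Pa; rewrite (bigD1 a0) //= leq_addr. Qed.

Definition good_path (G : skew_graph) (s : sg_V G) (P : seq (sg_E G)) :=
  simple_cycle P \/ simple_path s (sigV s) P \/ simple_path (sigV s) s P.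

Lemma find_path (G : skew_graph) (s : sg_V G) (h : sg_E G -> nat)
  (hc : cons_at s h) a0 : 0 < h a0 ->
  exists P, good_path s P /\ all (fun a => 0 < h a) P.
Proof.
move=> ha0.
pose e := Rh h.
have e0 : e (tail a0) (hd a0) by apply: pos_arc.
have [cyc|ncyc] := boolP (connect e (hd a0) (tail a0)).
  move/connectP: cyc => [p pP]; case/shortenP: pP => p' p'P up' _ p'l.
  case: (arcs_ofP a0 p'P) => W M Al.
  exists (a0 :: arcs_of h a0 (hd a0) p'); split; last by rewrite /= ha0 Al.
  left; rewrite /simple_cycle /= eqxx W /= M -p'l eqxx /=.
  exact: up'.
have fwd : connect e (hd a0) s || connect e (hd a0) (sigV s).
  apply/negPn/negP => /norP [ns ns'].
  pose A := [set z | connect e (hd a0) z].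
  have := cut hc (A := A); rewrite !inE => /(_ ns ns').
  rewrite big1; last first.
    move=> a /andP[ta na]; case: (posnP (h a)) => // /pos_arc Ea.
    by move: na ta; rewrite !inE => na ta; rewrite (connect_trans ta (connect1 Ea)) in na.
  move=> E; have := @sum_ge _ (fun a => (hd a \in A) && (tail a \notin A)) h a0.
  rewrite -E !inE connect0 ncyc /= => /(_ isT).
  by rewrite leqn0 => /eqP H; rewrite H in ha0.
have bwd : connect e s (tail a0) || connect e (sigV s) (tail a0).
  apply/negPn/negP => /norP [ns ns'].
  pose B := [set z | connect e z (tail a0)].
  have := cut hc (A := B); rewrite !inE => /(_ ns ns').
  rewrite [RHS]big1; last first.
    move=> a /andP[ha na]; case: (posnP (h a)) => // /pos_arc Ea.
    by move: na ha; rewrite !inE => na ha; rewrite (connect_trans (connect1 Ea) ha) in na.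
  move=> E; have := @sum_ge _ (fun a => (tail a \in B) && (hd a \notin B)) h a0.
  rewrite E !inE connect0 ncyc /= => /(_ isT).
  by rewrite leqn0 => /eqP H; rewrite H in ha0.
have key : forall t t', connect e (hd a0) t -> connect e t' (tail a0) ->
    t != t' /\ connect e t' t.
  move=> t t' H1 H2; split.
    apply: contraNneq ncyc => Ett; by rewrite (connect_trans H1) // Ett.
  exact: connect_trans (connect_trans H2 (connect1 e0)) H1.
case/orP: fwd => F; case/orP: bwd => B.
- by case: (key _ _ F B); rewrite eqxx.
- case: (key _ _ F B) => _ /(conn_path a0) [P [SP AP]].
  by exists P; split => //; right; right.
- case: (key _ _ F B) => _ /(conn_path a0) [P [SP AP]].
  by exists P; split => //; right; left.
- by case: (key _ _ F B); rewrite eqxx.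
Qed.


Lemma chi_sig (G : skew_graph) (P : seq (sg_E G)) a :
  chi (sig_path P) a = chi P (sigE a).
Proof.
rewrite /chi /sig_path mem_rev -{1}(sigE_invol a) mem_map //.
exact: can_inj (@sigE_invol G).
Qed.

Lemma sum_chi (T : finType) (Q : pred T) (P : seq T) : uniq P ->
  \sum_(a | Q a) ((a \in P) : nat) = count Q P.
Proof.
move=> uP; transitivity (\sum_(a in P) (Q a : nat)).
  rewrite big_mkcond [RHS]big_mkcond; apply: eq_bigr => a _.
  by case: (Q a); case: (a \in P).
rewrite -big_uniq // -sum1_count [RHS]big_mkcond; apply: eq_bigr => a _.
by case: (Q a).
Qed.

Lemma walk_count (G : skew_graph) (x v : sg_V G) (P : seq (sg_E G)) :
  walk x P ->
  count (fun a => tail a == v) P + (last x (map (@hd G) P) == v) =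
  count (fun a => hd a == v) P + (x == v).
Proof.
elim: P x => [|a P IH] x //= /andP[ta W].
have := IH _ W; rewrite (eqP ta).
move: (count _ P) (count _ P) (last _ _ == v) (x == v) (hd a == v) => c1 c2 b1 b2 b3.
move=> E; clear -E; lia.
Qed.

Lemma good_uniq (G : skew_graph) (s : sg_V G) P : good_path s P -> uniq P.
Proof.
case=> [|[]]; last 2 first.
- by case/and3P => _ _ /andP[_ /map_uniq].
- by case/and3P => _ _ /andP[_ /map_uniq].
by case: P => // a P; case/and3P => _ _ /map_uniq.
Qed.

Lemma chi_cons (G : skew_graph) (s : sg_V G) P : good_path s P -> cons_at s (chi P).
Proof.
move=> gp v H1 H2; rewrite /chi !sum_chi; last 2 first.
- exact: good_uniq gp.
- exact: good_uniq gp.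
case: gp => [|[]].
- case: P => // a P /and3P[W /eqP L _].
  have := walk_count v W; rewrite L => E; exact: (addIn E).
- case/and3P => W /eqP L _; have := walk_count v W.
  by rewrite L [sigV s == v]eq_sym [s == v]eq_sym (negbTE H2) (negbTE H1) !addn0.
- case/and3P => W /eqP L _; have := walk_count v W.
  by rewrite L [sigV s == v]eq_sym [s == v]eq_sym (negbTE H2) (negbTE H1) !addn0.
Qed.

Lemma cons_sig (G : skew_graph) (s : sg_V G) (h : sg_E G -> nat) :
  cons_at s h -> cons_at s (fun a => h (sigE a)).
Proof.
move=> hc v H1 H2.
rewrite sum_sig [RHS]sum_sig.
rewrite (eq_bigr h); last by move=> a _; rewrite sigE_invol.
rewrite [RHS](eq_bigr h); last by move=> a _; rewrite sigE_invol.
rewrite (eq_bigl (fun a => hd a == sigV v)); last by move=> a; rewrite tail_sigE sigV_eq.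
rewrite [RHS](eq_bigl (fun a => tail a == sigV v)); last by move=> a; rewrite head_sigE sigV_eq.
symmetry; apply: hc.
- by apply: contra H2 => /eqP <-; rewrite sigV_invol.
- by rewrite (inj_eq (can_inj (@sigV_invol G))).
Qed.


Lemma cons_add (G : skew_graph) (s : sg_V G) (h1 h2 : sg_E G -> nat) :
  cons_at s h1 -> cons_at s h2 -> cons_at s (fun a => h1 a + h2 a).
Proof. by move=> c1 c2 v H1 H2; rewrite !big_split /= c1 // c2. Qed.

Lemma cons_scale (G : skew_graph) (s : sg_V G) (h : sg_E G -> nat) d :
  cons_at s h -> cons_at s (fun a => d * h a).
Proof. by move=> c v H1 H2; rewrite -!big_distrr /= c. Qed.

Lemma elem_of (G : skew_graph) (u : sg_E G -> nat) (s : sg_V G)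
  (h : sg_E G -> nat) P d :
  good_path s P -> 0 < d -> (forall a, d * chi P a <= h a) ->
  (forall a, h a + h (sigE a) <= u a) ->
  elementary_flow u s [ffun a => d * chi P a + d * chi (sig_path P) a].
Proof.
move=> gp dp dh hu; exists d, P; split => //; split => //; split.
  by move=> a; rewrite ffunE.
split; [split|].
- move=> a; rewrite ffunE chi_sig; apply: leq_trans (hu a).
  exact: leq_add.
- move=> v H1 H2.
  rewrite (eq_bigr (fun a => d * chi P a + d * chi P (sigE a))); last first.
    by move=> a _; rewrite ffunE chi_sig.
  rewrite [RHS](eq_bigr (fun a => d * chi P a + d * chi P (sigE a))); last first.
    by move=> a _; rewrite ffunE chi_sig.
  apply: (cons_add (cons_scale d (chi_cons gp))
                   (cons_scale d (cons_sig (chi_cons gp)))) => //.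
- by move=> a; rewrite !ffunE !chi_sig sigE_invol addnC.
Qed.

Lemma elem_double (G : skew_graph) (u : sg_E G -> nat) (s : sg_V G)
  (g : {ffun sg_E G -> nat}) :
  elementary_flow u s g -> (forall a, g a + g a <= u a) ->
  elementary_flow u s [ffun a => g a + g a].
Proof.
case=> d [P [dp [gp [gdef [[gb gc] gs]]]]] hu.
exists (d + d), P; split; first by rewrite addn_gt0 dp.
split => //; split.
  by move=> a; rewrite ffunE gdef !mulnDl; lia.
split; [split|].
- by move=> a; rewrite ffunE.
- move=> v H1 H2.
  rewrite (eq_bigr (fun a => g a + g a)); last by move=> a _; rewrite ffunE.
  rewrite [RHS](eq_bigr (fun a => g a + g a)); last by move=> a _; rewrite ffunE.
  exact: (cons_add gc gc).
- by move=> a; rewrite !ffunE gs.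
Qed.

Lemma merge_ins (G : skew_graph) (u : sg_E G -> nat) (s : sg_V G)
  (F : sg_E G -> nat) n : forall (D : seq {ffun sg_E G -> nat}) (g : {ffun sg_E G -> nat}),
  size D <= n -> uniq D -> (forall x, x \in D -> elementary_flow u s x) ->
  elementary_flow u s g -> (forall a, F a = \sum_(x <- D) x a + g a) ->
  (forall a, F a <= u a) ->
  exists D2 : seq {ffun sg_E G -> nat},
    [/\ uniq D2, forall x, x \in D2 -> elementary_flow u s x,
        forall a, F a = \sum_(x <- D2) x a & size D2 <= (size D).+1].
Proof.
elim: n => [|n IH] D g sD uD eD eg FD Fu;
  (have [gD|gD] := boolP (g \in D); last first).
- exists (g :: D); split => //=.
  + by rewrite gD.
  + by move=> x; rewrite inE => /orP[/eqP ->|]; [|apply: eD].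
  + by move=> a; rewrite big_cons FD addnC.
- by move: sD gD; rewrite leqn0 => /nilP ->.
- exists (g :: D); split => //=.
  + by rewrite gD.
  + by move=> x; rewrite inE => /orP[/eqP ->|]; [|apply: eD].
  + by move=> a; rewrite big_cons FD addnC.
have pD := perm_to_rem gD.
have SD : forall a, \sum_(x <- D) x a = g a + \sum_(x <- rem g D) x a.
  by move=> a; rewrite (perm_big _ pD) big_cons.
have sR : size (rem g D) <= n.
  by move: sD; rewrite size_rem //; case: (size D).
have eg2 : elementary_flow u s [ffun a => g a + g a].
  apply: elem_double => // a; apply: leq_trans (Fu a).
  by rewrite FD SD -addnA leq_add2l leq_addl.
case: (IH (rem g D) [ffun a => g a + g a] sR (rem_uniq g uD)) => //.
- by move=> x /mem_rem; apply: eD.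
- by move=> a; rewrite FD SD ffunE addnAC addnC.
move=> D2 [u2 e2 F2 s2]; exists D2; split => //.
apply: leq_trans s2 _; by rewrite size_rem // ltnS leq_pred.
Qed.


Lemma decomp (G : skew_graph) (u : sg_E G -> nat) (s : sg_V G) n :
  forall h : sg_E G -> nat, #|[set a | 0 < h a]| <= n -> cons_at s h ->
  (forall a, h a + h (sigE a) <= u a) ->
  exists D : seq {ffun sg_E G -> nat},
    [/\ uniq D, forall g, g \in D -> elementary_flow u s g,
        forall a, h a + h (sigE a) = \sum_(g <- D) g a
      & size D <= #|[set a | 0 < h a]|].
Proof.
elim: n => [|n IH] h sh hc hu;
  (case: (pickP (fun a => 0 < h a)) => [a0 ha0|none]; last first).
- exists [::]; split => // a; rewrite big_nil.
  by have := none a; have := none (sigE a); rewrite /= !lt0n => /negbFE/eqP -> /negbFE/eqP ->.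
- by move: sh; rewrite leqn0 => /eqP/cards0_eq E; move: (in_set0 a0); rewrite -E inE ha0.
- exists [::]; split => // a; rewrite big_nil.
  by have := none a; have := none (sigE a); rewrite /= !lt0n => /negbFE/eqP -> /negbFE/eqP ->.
case: (find_path hc ha0) => P [gp /allP allpos].
have [a1 a1P] : exists a1, a1 \in P.
  case: P gp allpos => [|a1 P] gp _; last by exists a1; rewrite inE eqxx.
  exfalso; case: gp => [//|[]] /and3P[_ /eqP /= L _].
  - by move: (sigV_nofix s); rewrite /= -L eqxx.
  - by move: (sigV_nofix s); rewrite /= L eqxx.
case: (arg_minnP h a1P) => am amP0 amin; have amP : am \in P by [].
pose d := h am.
have dpos : 0 < d by apply: allpos.
have dle : forall a, d * chi P a <= h a.
  move=> a; rewrite /chi; case: (boolP (a \in P)) => aP /=.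
    by rewrite muln1; apply: amin.
  by rewrite muln0.
pose h' := fun a => h a - d * chi P a.
have hE : forall a, h a = h' a + d * chi P a by move=> a; rewrite subnK.
have ssub : [set a | 0 < h' a] \subset [set a | 0 < h a] :\ am.
  apply/subsetP => a; rewrite !inE /h' => ha'.
  apply/andP; split; last by apply: leq_trans ha' (leq_subr _ _).
  apply: contraTneq ha' => ->; by rewrite /chi amP muln1 subnn.
have amS : am \in [set a | 0 < h a] by rewrite inE.
have cardlt : #|[set a | 0 < h' a]| < #|[set a | 0 < h a]|.
  by rewrite (cardsD1 am [set a | 0 < h a]) amS add1n ltnS subset_leq_card.
have hc' : cons_at s h'.
  move=> v H1 H2; have := hc v H1 H2.
  rewrite (eq_bigr (fun a => h' a + d * chi P a)); last by move=> a _; rewrite -hE.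
  rewrite [RHS](eq_bigr (fun a => h' a + d * chi P a)); last by move=> a _; rewrite -hE.
  by rewrite !big_split /= -!big_distrr /= (chi_cons gp) // => /addIn.
have hu' : forall a, h' a + h' (sigE a) <= u a.
  by move=> a; apply: leq_trans (hu a); apply: leq_add; apply: leq_subr.
case: (IH h' _ hc' hu').
  by rewrite -ltnS; apply: leq_trans cardlt sh.
move=> D' [uD' eD' FD' sD'].
have eg := elem_of gp dpos dle hu.
case: (merge_ins (F := fun a => h a + h (sigE a)) (n := size D') (leqnn _) uD' eD' eg).
- move=> a; rewrite -FD' ffunE chi_sig (hE a) (hE (sigE a)); lia.
- exact: hu.
move=> D2 [u2 e2 F2 s2]; exists D2; split => //.
by apply: leq_trans s2 _; apply: leq_trans cardlt; rewrite ltnS.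
Qed.

Theorem mainTheorem2 (G : skew_graph) (u : sg_E G -> nat)
  (hu : symmetric_fun u) (s : sg_V G) (f : sg_E G -> nat)
  (hf : is_ISflow u s f) :
  exists D : seq {ffun sg_E G -> nat},
    [/\ uniq D,
        (forall g, g \in D -> elementary_flow u s g),
        (forall a, f a = \sum_(g <- D) g a)
      & size D <= #|sg_E G|].
Proof.
case: hf => [[hb hcons] hsym].
case: (exists_half hsym hcons) => h [hh hc].
case: (decomp (n := #|[set a | 0 < h a]|) (leqnn _) hc (u := u)).
  by move=> a; rewrite hh.
move=> D [uD eD FD sD]; exists D; split => //.
  by move=> a; rewrite -FD hh.
by apply: leq_trans sD (max_card _).
Qed.
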